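(* Let $m\ge 1$, $M=2^m$, and let $P_{C_0}(0),\ldots,P_{C_{m-1}}(0)\in(0,1)$ be given, with $P_{C_k}(1)=1-P_{C_k}(0)$. Then for every $j\in\{0,\ldots,M-1\}$, $$\sum_{i=0}^{M-1}\gamma_{i,j}=M\sqrt{P_j},$$ and for every $k\in\{0,\ldots,m-1\}$, $$\sum_{i=0}^{M-1}(-1)^{n_{i,k}}\gamma_{i,j}=M(-1)^{n_{j,k}}\sqrt{P_j\,\frac{P_{C_k}(\bar n_{j,k})}{P_{C_k}(n_{j,k})}}.$$
   Context: For an integer $0\le i\le M-1$, $n_{i,k}\in\{0,1\}$ denotes the $k$-th bit of its base-2 representation, i.e. $i=\sum_{k=0}^{m-1}n_{i,k}2^k$; for a bit $b$, $\bar b=1-b$. The symbol probabilities are $P_i=\prod_{k=0}^{m-1}P_{C_k}(n_{i,k})$. The coefficients $\gamma_{i,j}$ are defined by $$\gamma_{i,j}=\prod_{k=0}^{m-1}\Big[(-1)^{\bar n_{i,k}n_{j,k}}\sqrt{P_{C_k}(0)}+(-1)^{n_{i,k}\bar n_{j,k}}\sqrt{P_{C_k}(1)}\Big].$$ *)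

(* Defs.v *)
From mathcomp Require Import all_boot all_order all_algebra.
Set Implicit Arguments. Unset Strict Implicit. Unset Printing Implicit Defensive.
Import Order.TTheory GRing.Theory Num.Theory.
Local Open Scope ring_scope.

Definition nbit (i k : nat) : bool := odd (i %/ 2 ^ k).

Definition PC (R : pzRingType) (m : nat) (p0 : 'I_m -> R) (k : 'I_m) (b : bool) : R :=
  if b then 1 - p0 k else p0 k.

Definition Psym (R : pzRingType) (m : nat) (p0 : 'I_m -> R) (i : nat) : R :=
  \prod_(k < m) PC p0 k (nbit i k).

Definition gamma (R : rcfType) (m : nat) (p0 : 'I_m -> R) (i j : nat) : R :=
  \prod_(k < m)
    ((-1) ^+ (~~ nbit i k && nbit j k) * Num.sqrt (PC p0 k false)
     + (-1) ^+ (nbit i k && ~~ nbit j k) * Num.sqrt (PC p0 k true)).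

(* Main.v *)
Require Import Defs.
From mathcomp Require Import all_boot all_order all_algebra ring.
Import Order.TTheory GRing.Theory Num.Theory.
Local Open Scope ring_scope.

Lemma nbit_lt i m : (i < 2 ^ m)%N -> nbit i m = false.
Proof. by move=> h; rewrite /nbit divn_small. Qed.

Lemma nbit_hi i m : (i < 2 ^ m)%N -> nbit (i + 2 ^ m) m = true.
Proof.
move=> h; rewrite /nbit -[X in (_ + X)%N]mul1n divnDMl ?expn_gt0 //.
by rewrite divn_small.
Qed.

Lemma nbit_low i m k : (k < m)%N -> nbit (i + 2 ^ m) k = nbit i k.
Proof.
move=> km; rewrite /nbit -(subnK (ltnW km)) expnD divnDMl ?expn_gt0 //.
rewrite oddD oddX /=. by rewrite subn_eq0 leqNgt km addbF.
Qed.

Lemma fact_sum (R : comPzRingType) (F : nat -> bool -> R) m :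
  \sum_(i < 2 ^ m) \prod_(k < m) F k (nbit i k) = \prod_(k < m) (F k false + F k true).
Proof.
rewrite -(big_mkord xpredT (fun i => \prod_(k < m) F k (nbit i k))).
elim: m => [|m IH]; first by rewrite expn0 big_nat1 !big_ord0.
rewrite big_ord_recr /= -IH mulrDr !big_distrl /=.
rewrite expnS mul2n -addnn (big_cat_nat _ (n:=(2^m)%N)) ?leq_addr //=.
rewrite -{2}[(2^m)%N]add0n big_addn addnK.
congr (_ + _); rewrite !big_nat; apply: eq_bigr => i /andP[_ hi].
  by rewrite big_ord_recr /= nbit_lt.
rewrite big_ord_recr /= nbit_hi //. congr (_ * _).
by apply: eq_bigr => k _; rewrite nbit_low.
Qed.
Lemma Tsum (R : comPzRingType) (x y : R) (c : bool) :
  ((-1)^+(~~false && c) * x + (-1)^+(false && ~~c)*y) + ((-1)^+(~~true&&c)*x + (-1)^+(true && ~~c)*y) = 2 * (if c then y else x).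
Proof. by case: c => /=; rewrite ?expr0 ?expr1; ring. Qed.
Lemma Twsum (R : comPzRingType) (x y : R) (c : bool) :
  ((-1)^+(~~false && c) * x + (-1)^+(false && ~~c)*y) - ((-1)^+(~~true&&c)*x + (-1)^+(true && ~~c)*y) = (-1)^+c * 2 * (if c then x else y).
Proof. by case: c => /=; rewrite ?expr0 ?expr1; ring. Qed.

Lemma sqrt_prod (R : rcfType) (I : Type) (r : seq I) (P : pred I) (F : I -> R) :
  (forall i, P i -> 0 <= F i) ->
  Num.sqrt (\big[*%R/1]_(i <- r | P i) F i) = \big[*%R/1]_(i <- r | P i) Num.sqrt (F i).
Proof.
move=> h.
suff [] : 0 <= \big[*%R/1]_(i <- r | P i) F i /\
  \big[*%R/1]_(i <- r | P i) Num.sqrt (F i) = Num.sqrt (\big[*%R/1]_(i <- r | P i) F i) by [].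
apply: (big_ind2 (fun a b => 0 <= b /\ a = Num.sqrt b)).
- by rewrite sqrtr1.
- by move=> x1 x2 y1 y2 [h1 ->] [h2 ->]; rewrite mulr_ge0 // sqrtrM.
- by move=> i Pi; split => //; exact: h.
Qed.

Theorem corollary1 (R : rcfType) (m : nat) (p0 : 'I_m -> R) :
  (1 <= m)%N ->
  (forall k, 0 < p0 k < 1) ->
  forall j : 'I_(2 ^ m),
    \sum_(i < 2 ^ m) gamma p0 i j = (2 ^ m)%:R * Num.sqrt (Psym p0 j)
    /\
    forall k : 'I_m,
      \sum_(i < 2 ^ m) (-1) ^+ nbit i k * gamma p0 i j
      = (2 ^ m)%:R * (-1) ^+ nbit j k *
        Num.sqrt (Psym p0 j * (PC p0 k (~~ nbit j k) / PC p0 k (nbit j k))).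
Proof.
case: m p0 => [//|m'] p0 _ hp j.
have PCpos : forall k b, 0 < PC p0 k b.
  move=> k [] /=; have /andP[h1 h2] := hp k; by rewrite ?subr_gt0.
pose T (k : 'I_m'.+1) (c b : bool) :=
  (-1) ^+ (~~ b && c) * Num.sqrt (PC p0 k false)
     + (-1) ^+ (b && ~~ c) * Num.sqrt (PC p0 k true).
have two : \prod_(k < m'.+1) (2 : R) = (2 ^ m'.+1)%:R.
  by rewrite prodr_const card_ord natrX.
split.
  pose G n b := T (inord n) (nbit j n) b.
  have -> : \sum_(i < 2 ^ m'.+1) gamma p0 i j =
            \sum_(i < 2 ^ m'.+1) \prod_(k < m'.+1) G k (nbit i k).
    by apply: eq_bigr => i _; apply: eq_bigr => k _; rewrite /G inord_val.
  rewrite (@fact_sum R G).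
  under eq_bigr => k _ do rewrite /G /T inord_val Tsum.
  rewrite big_split /= two /Psym sqrt_prod; last by move=> k _; exact: ltW.
  by congr (_ * _); apply: eq_bigr => k _; case: (nbit j k).
move=> k.
pose G (n : nat) b := (-1) ^+ (b && (n == val k)) * T (inord n) (nbit j n) b.
have -> : \sum_(i < 2 ^ m'.+1) (-1) ^+ nbit i k * gamma p0 i j =
          \sum_(i < 2 ^ m'.+1) \prod_(l < m'.+1) G l (nbit i l).
  apply: eq_bigr => i _; rewrite /G big_split /=; congr (_ * _).
    rewrite (bigD1 k) //= eqxx andbT big1 ?mulr1 // => l hl; rewrite val_eqE (negbTE hl).
    by rewrite andbF expr0.
  by apply: eq_bigr => l _; rewrite inord_val.
rewrite (@fact_sum R G).
pose H (l : 'I_m'.+1) := if l == k then (-1) ^+ nbit j k * Num.sqrt (PC p0 k (~~ nbit j k))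
                         else Num.sqrt (PC p0 l (nbit j l)).
have -> : \prod_(l < m'.+1) (G l false + G l true) = \prod_(l < m'.+1) (2 * H l).
  apply: eq_bigr => l _; rewrite /G /H inord_val val_eqE /T.
  by case: eqP => [->|_]; case: (nbit j _) => /=; rewrite ?expr0 ?expr1 /=; ring.
rewrite big_split /= two -mulrA; congr (_ * _).
rewrite /Psym [\prod_(_ < _) PC _ _ _](bigD1 k) //=.
have -> : PC p0 k (nbit j k) * \prod_(i < m'.+1 | i != k) PC p0 i (nbit j i) *
     (PC p0 k (~~ nbit j k) / PC p0 k (nbit j k)) =
     PC p0 k (~~ nbit j k) * \prod_(i < m'.+1 | i != k) PC p0 i (nbit j i).
  by field; apply/lt0r_neq0/PCpos.
rewrite sqrtrM; last exact: ltW.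
rewrite sqrt_prod; last by move=> i _; exact: ltW.
rewrite (bigD1 k) //= /H eqxx mulrA; congr (_ * _).
by apply: eq_bigr => i /negbTE ->.
Qed.
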